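(* Let $A\in\mathbb{C}^{m\times n}$ have rank $r$, $B\in\mathbb{C}^{m\times n}$ have rank $s$, and $E=B-A$. Then $$\|B^{\dagger}-A^{\dagger}\|_{F}^{2}\geq\max\big\{\alpha'_{1}+\|B^{\dagger}EA^{\dagger}\|_{F}^{2},\ \alpha'_{2}+\|A^{\dagger}EB^{\dagger}\|_{F}^{2}\big\},$$ where $$\alpha'_{1}:=\frac{\|A^{\dagger}E\|_{F}^{2}-\|A^{\dagger}EB^{\dagger}B\|_{F}^{2}}{\|A\|_{2}^{2}}+\frac{\|EB^{\dagger}\|_{F}^{2}-\|AA^{\dagger}EB^{\dagger}\|_{F}^{2}}{\|B\|_{2}^{2}},$$ $$\alpha'_{2}:=\frac{\|EA^{\dagger}\|_{F}^{2}-\|BB^{\dagger}EA^{\dagger}\|_{F}^{2}}{\|A\|_{2}^{2}}+\frac{\|B^{\dagger}E\|_{F}^{2}-\|B^{\dagger}EA^{\dagger}A\|_{F}^{2}}{\|B\|_{2}^{2}}.$$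
   Context: $M^{\dagger}$ denotes the Moore–Penrose inverse of $M$, $\|\cdot\|_{2}$ the spectral norm and $\|\cdot\|_{F}$ the Frobenius norm. *)

(* Defs.v *)
From HB Require Import structures.
From mathcomp Require Import all_boot all_order all_algebra.
From mathcomp Require Import complex.
From mathcomp Require Import classical_sets reals.
Set Implicit Arguments. Unset Strict Implicit. Unset Printing Implicit Defensive.
Import Order.TTheory GRing.Theory Num.Theory.
Local Open Scope ring_scope.

Definition ctrmx (R : realType) m n (A : 'M[R[i]]_(m, n)) : 'M[R[i]]_(n, m) :=
  (map_mx Num.conj A)^T.

(* X is the Moore--Penrose inverse of A (the four Penrose equations);
   it exists and is unique for every complex matrix A *)
Definition is_pinv (R : realType) m n (A : 'M[R[i]]_(m, n)) (X : 'M[R[i]]_(n, m)) :=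
  [/\ A *m X *m A = A, X *m A *m X = X,
      ctrmx (A *m X) = A *m X & ctrmx (X *m A) = X *m A].

Definition frobn (R : realType) m n (A : 'M[R[i]]_(m, n)) : R :=
  Num.sqrt (\sum_(i < m) \sum_(j < n) (@complex.Re R (A i j) ^+ 2 + @complex.Im R (A i j) ^+ 2)).

Definition vnorm (R : realType) n (x : 'cV[R[i]]_n) : R :=
  Num.sqrt (\sum_(i < n) (@complex.Re R (x i 0) ^+ 2 + @complex.Im R (x i 0) ^+ 2)).

Definition specn (R : realType) m n (A : 'M[R[i]]_(m, n)) : R :=
  sup [set vnorm (A *m x) | x in [set x : 'cV[R[i]]_n | vnorm x <= 1]]%classic.

(* Main.v *)
Require Import Defs.
From HB Require Import structures.
From mathcomp Require Import all_boot all_order all_algebra.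
From mathcomp Require Import complex.
From mathcomp Require Import classical_sets reals.
From mathcomp Require Import ring lra.
Import Order.TTheory GRing.Theory Num.Theory.
Local Open Scope ring_scope.
Local Open Scope complex_scope.
Local Open Scope ring_scope.

Import Normc.
Set Implicit Arguments. Unset Strict Implicit. Unset Printing Implicit Defensive.
Section Alg.
Variable R : realType.
Local Notation C := (R[i]).
Local Notation ct := (@ctrmx R _ _).

Lemma ctM m n p (X : 'M[C]_(m,n)) (Y : 'M[C]_(n,p)) : ct (X *m Y) = ct Y *m ct X.
Proof. by rewrite /ctrmx map_mxM trmx_mul. Qed.
Lemma ctK m n (X : 'M[C]_(m,n)) : ct (ct X) = X.
Proof. by apply/matrixP=> i j; rewrite /ctrmx !mxE conjCK. Qed.
Lemma ctD m n (X Y : 'M[C]_(m,n)) : ct (X + Y) = ct X + ct Y.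
Proof. by rewrite /ctrmx map_mxD linearD. Qed.
Lemma ctN m n (X : 'M[C]_(m,n)) : ct (- X) = - ct X.
Proof. by rewrite /ctrmx map_mxN linearN. Qed.
Lemma ctB m n (X Y : 'M[C]_(m,n)) : ct (X - Y) = ct X - ct Y.
Proof. by rewrite ctD ctN. Qed.
Lemma ct1 n : ct (1%:M : 'M[C]_n) = 1%:M.
Proof. by rewrite /ctrmx map_mx1 trmx1. Qed.

Definition abs2 (z : C) : R := complex.Re z ^+ 2 + complex.Im z ^+ 2.
Definition f2 m n (X : 'M[C]_(m,n)) : R := \sum_(i < m) \sum_(j < n) abs2 (X i j).

Lemma abs2_ge0 z : 0 <= abs2 z.
Proof. by rewrite /abs2 addr_ge0 // sqr_ge0. Qed.
Lemma abs2E z : (abs2 z)%:C = z * Num.conj z.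
Proof. by rewrite /abs2 add_Re2_Im2 sqr_normc. Qed.
Lemma f2_ge0 m n (X : 'M[C]_(m,n)) : 0 <= f2 X.
Proof. by apply: sumr_ge0 => i _; apply: sumr_ge0 => j _; apply: abs2_ge0. Qed.
Lemma frobnE m n (X : 'M[C]_(m,n)) : frobn X ^+ 2 = f2 X.
Proof. by rewrite /frobn sqr_sqrtr // f2_ge0. Qed.

Definition ip m n (X Y : 'M[C]_(m,n)) : C := \tr (X *m ct Y).
Lemma f2E m n (X : 'M[C]_(m,n)) : (f2 X)%:C = \tr (X *m ct X).
Proof.
rewrite /f2 /mxtrace raddf_sum /=; apply: eq_bigr => i _.
rewrite mxE raddf_sum /=; apply: eq_bigr => j _.
by rewrite abs2E /ctrmx !mxE.
Qed.

Lemma f2ct m n (X : 'M[C]_(m,n)) : f2 (ct X) = f2 X.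
Proof. by apply: complexI; rewrite !f2E ctK mxtrace_mulC. Qed.
Lemma f2N m n (X : 'M[C]_(m,n)) : f2 (- X) = f2 X.
Proof. by apply: complexI; rewrite !f2E ctN mulmxN mulNmx opprK. Qed.

Lemma pyth m n (X Y : 'M[C]_(m,n)) : \tr (X *m ct Y) = 0 -> \tr (Y *m ct X) = 0 ->
  f2 (X + Y) = f2 X + f2 Y.
Proof.
move=> h1 h2; apply: complexI; rewrite rmorphD /= !f2E ctD mulmxDl !mulmxDr !mxtraceD h1 h2.
by rewrite addr0 add0r.
Qed.

Lemma pythL m n (P : 'M[C]_m) (X Y : 'M[C]_(m,n)) : ct P = P -> P *m X = X -> P *m Y = 0 ->
  f2 (X + Y) = f2 X + f2 Y.
Proof.
move=> hP hX hY; apply: pyth.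
  by rewrite -hX -mulmxA mxtrace_mulC -mulmxA -{1}hP -ctM hY /ctrmx map_mx0 trmx0 mulmx0 mxtrace0.
by rewrite -hX ctM hP mulmxA mxtrace_mulC mulmxA hY mul0mx mxtrace0.
Qed.

Lemma pythR m n (Q : 'M[C]_n) (X Y : 'M[C]_(m,n)) : ct Q = Q -> X *m Q = X -> Y *m Q = 0 ->
  f2 (X + Y) = f2 X + f2 Y.
Proof.
move=> hQ hX hY; rewrite -f2ct ctD -(f2ct X) -(f2ct Y); apply: (pythL hQ).
  by rewrite -{1}hQ -ctM hX.
by rewrite -{1}hQ -ctM hY /ctrmx map_mx0 trmx0.
Qed.

Lemma zm (V : zmodType) (a b c d : V) : d - c = (a - b) + (d - a) + (b - c).
Proof. by rewrite [a - b + _]addrC -[d - a + _]addrA [- a + _]addrA addNr add0r addrA subrK. Qed.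

Lemma divsq (x y s : R) : 0 <= y -> x <= s ^+ 2 * y -> x / s ^+ 2 <= y.
Proof.
move=> y0 h; have := sqr_ge0 s; rewrite le_eqVlt => /orP [/eqP <-|s0].
  by rewrite invr0 mulr0.
by rewrite ler_pdivrMr // mulrC.
Qed.

Lemma main_alg m n (A B : 'M[C]_(m,n)) (Ad Bd : 'M[C]_(n,m)) (sA sB : R) :
  is_pinv A Ad -> is_pinv B Bd ->
  (forall p (X : 'M[C]_(n,p)), f2 (B *m X) <= sB ^+ 2 * f2 X) ->
  (forall p (Y : 'M[C]_(m,p)), f2 (ct A *m Y) <= sA ^+ 2 * f2 Y) ->
  f2 (Bd *m (B - A) *m Ad) + (f2 (Ad *m (B - A)) - f2 (Ad *m (B - A) *m Bd *m B)) / sA ^+ 2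
   + (f2 ((B - A) *m Bd) - f2 (A *m Ad *m (B - A) *m Bd)) / sB ^+ 2 <= f2 (Bd - Ad).
Proof.
case=> hA1 hA2 hA3 hA4 [hB1 hB2 hB3 hB4] SB SA.
set E := B - A.
set P := Bd *m B; set Q := A *m Ad.
have PP : P *m P = P by rewrite /P mulmxA hB2.
have QQ : Q *m Q = Q by rewrite /Q mulmxA hA1.
have k1 : Bd *m ct Bd *m ct B = Bd by rewrite -mulmxA -ctM hB3 mulmxA hB2.
have k2 : ct A *m (1%:M - Q) = 0.
  have e : ct A *m Q = ct A by rewrite -[in RHS]hA1 ctM hA3.
  by rewrite mulmxBr mulmx1 e subrr.
have k3 : (1%:M - P) *m ct B = 0.
  have e : P *m ct B = ct B by rewrite -[in RHS]hB1 -mulmxA ctM hB4.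
  by rewrite mulmxBl mul1mx e subrr.
have k4 : ct A *m (ct Ad *m Ad) = Ad by rewrite mulmxA -ctM hA4 hA2.
have k5 : B *m Bd *m ct Bd = ct Bd by rewrite -hB3 -ctM mulmxA hB2.
have k6 : ct Ad *m (Ad *m A) = ct Ad by rewrite -hA4 -ctM hA2.
set T1 := - (Bd *m E *m Ad).
set T2 := Bd *m ct Bd *m ct E *m (1%:M - Q).
set T3 := (1%:M - P) *m ct E *m ct Ad *m Ad.
have eT1 : T1 = Bd *m A *m Ad - Bd *m B *m Ad.
  by rewrite /T1 /E mulmxBr mulmxBl opprB.
have eT2 : T2 = Bd - Bd *m A *m Ad.
  rewrite /T2 /E ctB [Bd *m ct Bd *m _]mulmxBr mulmxBl k1 -(mulmxA _ (ct A)) k2 mulmx0 subr0.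
  by rewrite mulmxBr mulmx1 /Q mulmxA.
have eT3 : T3 = Bd *m B *m Ad - Ad.
  rewrite /T3 /E ctB [(1%:M - P) *m _]mulmxBr k3 sub0r !mulNmx -!mulmxA k4 mulmxBl mul1mx opprB.
  by rewrite /P mulmxA.
have eD : Bd - Ad = T1 + T2 + T3 by rewrite eT1 eT2 eT3 -zm.
have hP : ct P = P by exact: hB4.
have hQ : ct Q = Q by exact: hA3.
have PBd : forall p (Z : 'M[C]_(m,p)), P *m (Bd *m Z) = Bd *m Z.
  by move=> p Z; rewrite mulmxA /P hB2.
have f2D : f2 (Bd - Ad) = f2 T1 + f2 T2 + f2 T3.
  rewrite eD (pythL hP).
  - rewrite (pythR hQ) //.
      by rewrite /T1 mulNmx -!mulmxA /Q [Ad *m _]mulmxA hA2.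
    by rewrite /T2 -[_ *m (1%:M - Q) *m Q]mulmxA mulmxBl mul1mx QQ subrr mulmx0.
  - by rewrite mulmxDr /T1 /T2 mulmxN /P !mulmxA !hB2.
  - by rewrite /T3 !mulmxA [P *m (1%:M - P)]mulmxBr mulmx1 PP subrr !mul0mx.
set Y := ct Bd *m ct E *m (1%:M - Q).
have T2Y : T2 = Bd *m Y by rewrite /T2 /Y !mulmxA.
have BT2 : B *m T2 = Y by rewrite T2Y /Y !mulmxA k5.
have bT2 : f2 Y <= sB ^+ 2 * f2 T2 by rewrite -BT2 SB.
have eY : f2 Y = f2 (E *m Bd) - f2 (A *m Ad *m E *m Bd).
  have -> : f2 Y = f2 ((1%:M - Q) *m (E *m Bd)).
    by rewrite -f2ct /Y !ctM !ctK ctB ct1 hQ.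
  have -> : f2 (A *m Ad *m E *m Bd) = f2 (Q *m (E *m Bd)) by rewrite /Q !mulmxA.
  have dec : f2 (E *m Bd) = f2 (Q *m (E *m Bd)) + f2 ((1%:M - Q) *m (E *m Bd)).
    rewrite -(pythL hQ); first by rewrite -mulmxDl addrC subrK mul1mx.
      by rewrite mulmxA QQ.
    by rewrite mulmxA mulmxBr mulmx1 QQ subrr mul0mx.
  by rewrite dec addrAC subrr add0r.
set W := (1%:M - P) *m ct E *m ct Ad.
have T3A : T3 *m A = W by rewrite /T3 -/W -mulmxA /W -mulmxA k6.
have bT3 : f2 W <= sA ^+ 2 * f2 T3.
  by rewrite -T3A -f2ct ctM -(f2ct T3) SA.
have eW : f2 W = f2 (Ad *m E) - f2 (Ad *m E *m Bd *m B).
  have -> : f2 W = f2 ((Ad *m E) *m (1%:M - P)).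
    by rewrite -f2ct /W !ctM !ctK ctB ct1 hP mulmxA.
  have -> : f2 (Ad *m E *m Bd *m B) = f2 ((Ad *m E) *m P) by rewrite /P !mulmxA.
  have dec : f2 (Ad *m E) = f2 ((Ad *m E) *m P) + f2 ((Ad *m E) *m (1%:M - P)).
    rewrite -(pythR hP); first by rewrite -mulmxDr addrC subrK mulmx1.
      by rewrite -mulmxA PP.
    by rewrite -mulmxA mulmxBl mul1mx PP subrr mulmx0.
  by rewrite dec addrAC subrr add0r.
have h1 := divsq (f2_ge0 T3) bT3.
have h2 := divsq (f2_ge0 T2) bT2.
rewrite eW in h1; rewrite eY in h2.
rewrite f2D /T1 f2N -/E.
move: h1 h2; set a := f2 _; set b := _ / _; set c := _ / _; set d := f2 T2; set e := f2 T3.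
lra.
Qed.

Lemma abs2_eq0 (z : C) : abs2 z = 0 -> z = 0.
Proof.
case: z => a b; rewrite /abs2 /= => /eqP; rewrite paddr_eq0 ?sqr_ge0 //.
by case/andP => /eqP/eqP; rewrite sqrf_eq0 => /eqP -> /eqP/eqP; rewrite sqrf_eq0 => /eqP ->.
Qed.

Lemma f2_eq0 m n (X : 'M[C]_(m,n)) : f2 X = 0 -> X = 0.
Proof.
move=> h; apply/matrixP => i j; rewrite mxE; apply: abs2_eq0.
have hi : \sum_(j < n) abs2 (X i j) = 0.
  apply: (psumr_eq0P _ h) => // k _; apply: sumr_ge0 => l _; exact: abs2_ge0.
by apply: (psumr_eq0P _ hi) => // k _; exact: abs2_ge0.
Qed.

Lemma f2_0 m n : f2 (0 : 'M[C]_(m,n)) = 0.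
Proof. by rewrite /f2 big1 // => i _; rewrite big1 // => j _; rewrite mxE /abs2 /= expr0n /= addr0. Qed.

Lemma abs2Z (t : R) (z : C) : abs2 (t%:C * z) = t ^+ 2 * abs2 z.
Proof. by case: z => a b; rewrite /abs2 /=; ring. Qed.

Lemma f2Z m n (t : R) (X : 'M[C]_(m,n)) : f2 (t%:C *: X) = t ^+ 2 * f2 X.
Proof.
rewrite /f2 mulr_sumr; apply: eq_bigr => i _; rewrite mulr_sumr; apply: eq_bigr => j _.
by rewrite mxE abs2Z.
Qed.

Lemma vnormE n (x : 'cV[C]_n) : vnorm x = Num.sqrt (f2 x).
Proof. by rewrite /vnorm /f2; congr Num.sqrt; apply: eq_bigr => i _; rewrite big_ord1. Qed.

Lemma f2cols m p (X : 'M[C]_(m,p)) : f2 X = \sum_(j < p) f2 (col j X).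
Proof.
rewrite /f2 exchange_big; apply: eq_bigr => j _; apply: eq_bigr => i _.
by rewrite big_ord1 mxE.
Qed.

Lemma normc_ge0 (z : C) : 0 <= normc z.
Proof. by case: z => a b; rewrite /normc sqrtr_ge0. Qed.

Lemma normc_abs2 (z : C) : normc z ^+ 2 = abs2 z.
Proof. by case: z => a b; rewrite /normc /abs2 /= sqr_sqrtr // addr_ge0 ?sqr_ge0. Qed.

Lemma normc_sum I (r : seq I) (F : I -> C) : normc (\sum_(i <- r) F i) <= \sum_(i <- r) normc (F i).
Proof.
elim/big_rec2: _ => [|i y1 y2 _ h]; first by rewrite normc0.
exact: le_trans (le_normcD _ _) (lerD (lexx _) h).
Qed.

Definition specS m n (A : 'M[C]_(m,n)) : set R :=
  [set vnorm (A *m x) | x in [set x : 'cV[C]_n | vnorm x <= 1]]%classic.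

Lemma specnE m n (A : 'M[C]_(m,n)) : specn A = sup (specS A).
Proof. by []. Qed.

Lemma abs2_le_f2 n (x : 'cV[C]_n) j : abs2 (x j 0) <= f2 x.
Proof.
rewrite /f2 (bigD1 j) //= big_ord1 lerDl; apply: sumr_ge0 => i _.
apply: sumr_ge0 => k _; exact: abs2_ge0.
Qed.

Lemma specS_ub m n (A : 'M[C]_(m,n)) : has_ubound (specS A).
Proof.
exists (Num.sqrt (\sum_(i < m) (\sum_(j < n) normc (A i j)) ^+ 2)).
move=> y [x hx <-]; rewrite vnormE; apply: ler_wsqrtr.
move: hx; rewrite /= vnormE -sqrtr1 ler_sqrt // => f2x.
have nx : forall j, normc (x j 0) <= 1.
  move=> j; rewrite -(ler_pXn2r (n:=2)) ?nnegrE ?normc_ge0 // expr1n normc_abs2.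
  exact: le_trans (abs2_le_f2 x j) f2x.
rewrite /f2; apply: ler_sum => i _; rewrite big_ord1 -normc_abs2.
apply: lerXn2r; first by rewrite nnegrE normc_ge0.
  by rewrite nnegrE; apply: sumr_ge0 => j _; exact: normc_ge0.
rewrite mxE; apply: le_trans (normc_sum _ _) _; apply: ler_sum => j _.
by rewrite normcM; apply: ler_piMr (normc_ge0 _) (nx j).
Qed.

Lemma spec_ge0 m n (A : 'M[C]_(m,n)) : 0 <= specn A.
Proof.
apply: (ub_le_sup (specS_ub A)); exists 0.
  by rewrite /= vnormE f2_0 sqrtr0 ler01.
by rewrite mulmx0 vnormE f2_0 sqrtr0.
Qed.

Lemma spec_col m n (A : 'M[C]_(m,n)) (x : 'cV[C]_n) : f2 (A *m x) <= specn A ^+ 2 * f2 x.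
Proof.
have hub := ub_le_sup (specS_ub A).
have [x0|xn0] := eqVneq (f2 x) 0.
  by rewrite (f2_eq0 x0) mulmx0 !f2_0 mulr0.
have fx : 0 < f2 x by rewrite lt_def xn0 f2_ge0.
set c := (Num.sqrt (f2 x))^-1.
have c2 : c ^+ 2 = (f2 x)^-1 by rewrite /c exprVn sqr_sqrtr // f2_ge0.
have h : vnorm (A *m (c%:C *: x)) <= specn A.
  by apply: hub; exists (c%:C *: x) => //=; rewrite vnormE f2Z c2 mulVf // sqrtr1.
rewrite vnormE -scalemxAr f2Z c2 in h.
have h2 : (f2 x)^-1 * f2 (A *m x) <= specn A ^+ 2.
  rewrite -[X in X <= _]sqr_sqrtr ?mulr_ge0 ?invr_ge0 ?f2_ge0 //.
  by apply: lerXn2r; rewrite ?nnegrE ?sqrtr_ge0 ?spec_ge0.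
by rewrite -ler_pdivrMr // mulrC.
Qed.

Lemma spec_mat m n p (A : 'M[C]_(m,n)) (X : 'M[C]_(n,p)) : f2 (A *m X) <= specn A ^+ 2 * f2 X.
Proof.
rewrite !f2cols mulr_sumr; apply: ler_sum => j _.
have -> : col j (A *m X) = A *m col j X.
  by apply/matrixP => i k; rewrite !mxE; apply: eq_bigr => l _; rewrite !mxE.
exact: spec_col.
Qed.

Lemma f2DC m n (X Y : 'M[C]_(m,n)) :
  (f2 (X + Y))%:C = (f2 X)%:C + (f2 Y)%:C + \tr (X *m ct Y) + \tr (Y *m ct X).
Proof.
rewrite !f2E ctD mulmxDl !mulmxDr !mxtraceD.
by ring.
Qed.

Lemma ctZ m n (a : C) (X : 'M[C]_(m,n)) : ct (a *: X) = Num.conj a *: ct X.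
Proof. by apply/matrixP => i j; rewrite !mxE rmorphM. Qed.

Lemma conjR (t : R) : Num.conj (t%:C) = t%:C.
Proof. exact: conjc_real. Qed.

Lemma quadlem (w y s2 : R) : 0 <= w -> 0 <= y -> 0 <= s2 ->
  (forall t, 0 <= t ^+ 2 * y + s2 * w - t * w - t * w) -> w <= s2 * y.
Proof.
move=> w0 y0 s0 h; have := h s2; have := h (w / (y + 1)).
have u0 : 0 < y + 1 by lra.
have [->|sp] := eqVneq s2 0.
  move=> h1 _; rewrite mul0r.
  have e : (w / (y + 1)) ^+ 2 * y + 0 * w - w / (y + 1) * w - w / (y + 1) * w
         = (- w ^+ 2 * y - 2 * w ^+ 2) / (y + 1) ^+ 2.
    by field; rewrite gt_eqF.
  rewrite e pmulr_lge0 ?invr_gt0 ?exprn_gt0 // in h1.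
  nra.
move=> _ h2; have sp' : 0 < s2 by rewrite lt_def sp s0.
have : 0 <= s2 * (s2 * y - w) by nra.
rewrite pmulr_rge0 //; lra.
Qed.

Lemma trN n (M : 'M[C]_n) : \tr (- M) = - \tr M.
Proof. exact: raddfN. Qed.

Lemma spec_ct m n p (A : 'M[C]_(m,n)) (Y : 'M[C]_(m,p)) : f2 (ct A *m Y) <= specn A ^+ 2 * f2 Y.
Proof.
set W := ct A *m Y.
have tr1 : \tr (Y *m ct (A *m W)) = (f2 W)%:C.
  by rewrite ctM mulmxA mxtrace_mulC mulmxA f2E.
have tr2 : \tr (A *m W *m ct Y) = (f2 W)%:C.
  by rewrite -mulmxA mxtrace_mulC -mulmxA -[A in ct Y *m A](ctK A) -ctM f2E.
have key : forall t : R, f2 (t%:C *: Y - A *m W)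
    = t ^+ 2 * f2 Y + f2 (A *m W) - t * f2 W - t * f2 W.
  move=> t; apply: complexI; rewrite f2DC f2N f2Z.
  rewrite ctN -scalemxAl mxtraceZ mulmxN trN tr1.
  rewrite ctZ conjR -scalemxAr mxtraceZ mulNmx trN tr2.
  by rewrite !rmorphB !rmorphD !rmorphM /= !mulrN.
apply: quadlem; rewrite ?f2_ge0 ?exprn_ge0 ?spec_ge0 // => t.
apply: le_trans (f2_ge0 (t%:C *: Y - A *m W)) _; rewrite key.
by rewrite !lerD ?lexx // spec_mat.
Qed.
End Alg.

Lemma re3 (R : realType) (x y z d : R) : x + y + z <= d -> z + y + x <= d.
Proof. move=> h; lra. Qed.
Lemma re3' (R : realType) (x y z d : R) : z + x + y <= d -> x + y + z <= d.
Proof. move=> h; lra. Qed.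

Theorem theorem3p6 (R : realType) (m n r s : nat)
  (A B : 'M[R[i]]_(m, n)) (Ad Bd : 'M[R[i]]_(n, m)) :
  \rank A = r -> \rank B = s ->
  is_pinv A Ad -> is_pinv B Bd ->
  let E := B - A in
  let alpha1 :=
    (frobn (Ad *m E) ^+ 2 - frobn (Ad *m E *m Bd *m B) ^+ 2) / specn A ^+ 2
    + (frobn (E *m Bd) ^+ 2 - frobn (A *m Ad *m E *m Bd) ^+ 2) / specn B ^+ 2 in
  let alpha2 :=
    (frobn (E *m Ad) ^+ 2 - frobn (B *m Bd *m E *m Ad) ^+ 2) / specn A ^+ 2
    + (frobn (Bd *m E) ^+ 2 - frobn (Bd *m E *m Ad *m A) ^+ 2) / specn B ^+ 2 in
  Num.max (alpha1 + frobn (Bd *m E *m Ad) ^+ 2)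
          (alpha2 + frobn (Ad *m E *m Bd) ^+ 2)
  <= frobn (Bd - Ad) ^+ 2.
Proof.
move=> _ _ hA hB; cbv zeta.
rewrite !frobnE ge_max; apply/andP; split.
  apply: re3'; exact: (main_alg hA hB (fun p => @spec_mat _ _ _ p B) (fun p => @spec_ct _ _ _ p A)).
apply: re3.
have h := main_alg hB hA (fun p => @spec_mat _ _ _ p A) (fun p => @spec_ct _ _ _ p B).
have eAB : A - B = - (B - A) by rewrite opprB.
rewrite eAB !mulmxN !mulNmx !f2N in h.
by rewrite -[Bd - Ad]opprB f2N.
Qed.
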